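(* Let $M$ be a partial multiplication matrix and let $\mathcal{C}\subseteq\mathsf{Grid}(M)$ be a permutation class, with $\mathcal{C}^\#$ the set of $M$-gridded permutations whose underlying permutations lie in $\mathcal{C}$. Then the set of $M$-indivisible elements of $\mathcal{C}^\#$ is labelled well quasi-ordered if and only if $\mathcal{C}^\#$ is labelled well quasi-ordered. Furthermore, the same statement holds with ''labelled well quasi-ordered'' replaced by ''well quasi-ordered'' (under gridded containment).
   Context: Permutations are identified with their plots; a permutation class is a containment-closed set of permutations. A gridding matrix has entries in $\{0,1,-1\}$; an $m\times n$ one has $m$ columns, $n$ rows, $M_{ij}$ in column $i$ from the left and row $j$ from the bottom. An $M$-gridding of a permutation $\pi$ of length $L$ is a choice of vertical lines $\tfrac12=v_0\le\dots\le v_m=L+\tfrac12$ and horizontal lines $\tfrac12=h_0\le\dots\le h_n=L+\tfrac12$, not through points of $\pi$, such that in each cell $C_{ij}=\{v_{i-1}<x<v_i,\ h_{j-1}<y<h_j\}$ the points of $\pi$ are absent if $M_{ij}=0$, increasing if $M_{ij}=1$, decreasing if $M_{ij}=-1$; the result is an $M$-gridded permutation, and $\mathsf{Grid}(M)$ is the class of permutations with an $M$-gridding. Gridded containment: $\sigma^\#\le\pi^\#$ if some subsequence of $\pi$ order-isomorphic to $\sigma$ maps each point of $\sigma^\#$ to a point lying in the cell with the same index. $M$ is a partial multiplication matrix: there are fixed $c_1,\dots,c_m,r_1,\dots,r_n\in\{\pm1\}$ with $M_{ij}=c_ir_j$ for each non-zero entry. Column $i$ is oriented left-to-right if $c_i=1$,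 right-to-left otherwise; row $j$ bottom-to-top if $r_j=1$, top-to-bottom otherwise. $M$-sum: $\sigma^\#\boxplus\tau^\#$ is the $M$-gridded permutation whose points are those of $\sigma^\#$ and $\tau^\#$, each in its cell, with the relative order among points of $\sigma^\#$ and among points of $\tau^\#$ unchanged, and such that in every column (resp. row) of cells all points of $\sigma^\#$ precede all points of $\tau^\#$ in that column's (resp. row's) orientation. An $M$-gridded permutation is $M$-divisible if it equals $\sigma^\#\boxplus\tau^\#$ with both non-empty, and $M$-indivisible otherwise. A quasi-order is wqo if every infinite sequence $x_1,x_2,\dots$ has $i<j$ with $x_i\le x_j$. For a quasi-order $L$, an $L$-labelled gridded permutation is a gridded permutation with a map from its points to $L$; $(\sigma^\#,\ell_\sigma)\le(\pi^\#,\ell_\pi)$ if some gridded embedding maps each point to one whose label is $\ge$ its own. A set of gridded permutations is labelled well quasi-ordered if its set of $L$-labelled elements is wqo for every wqo $L$. *)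

(* Defs.v *)
From mathcomp Require Import all_boot all_algebra.
Set Implicit Arguments. Unset Strict Implicit. Unset Printing Implicit Defensive.
Import GRing.Theory Num.Theory.

(* A permutation of length L is the sequence s = [s_0; ...; s_(L-1)] of the
   values at positions 0..L-1 (its plot is {(i, s_i)}); values are 0..L-1. *)
Definition is_perm (s : seq nat) : Prop := perm_eq s (iota 0 (size s)).

Definition std (s : seq nat) : seq nat := [seq count (fun u => u < v) s | v <- s].

Definition pembeds (s t : seq nat) (f : nat -> nat) : Prop :=
  (forall i j, i < j < size s -> f i < f j) /\
  (forall i, i < size s -> f i < size t) /\
  (forall i j, i < size s -> j < size s ->
     (nth 0 s i < nth 0 s j) = (nth 0 t (f i) < nth 0 t (f j))).

Definition perm_le (s t : seq nat) : Prop := exists f, pembeds s t f.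

Definition perm_class (C : seq nat -> Prop) : Prop :=
  (forall s, C s -> is_perm s) /\
  (forall s t, is_perm s -> perm_le s t -> C t -> C s).

(* An m x n gridding matrix: m columns, n rows, M i j in column i (from the
   left, 0-based) and row j (from the bottom, 0-based). *)
Definition gridding_matrix (M : nat -> nat -> int) (m n : nat) : Prop :=
  forall i j, i < m -> j < n ->
    [|| M i j == 0%R, M i j == 1%R | M i j == (-1)%R].

Definition pm_signs (M : nat -> nat -> int) (m n : nat) (c r : nat -> int) : Prop :=
  (forall i, i < m -> (c i == 1%R) || (c i == (-1)%R)) /\
  (forall j, j < n -> (r j == 1%R) || (r j == (-1)%R)) /\
  (forall i j, i < m -> j < n -> M i j != 0%R -> M i j = (c i * r j)%R).

(* gpt = the permutation; gcol / grow = the column / row index of the cell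
   containing the point at each position.  (Since grid lines lie at
   half-integers, a gridding is the same as such a cell assignment.) *)
Record gperm := GPerm { gpt : seq nat; gcol : seq nat; grow : seq nat }.

Definition is_gridded (M : nat -> nat -> int) (m n : nat) (p : gperm) : Prop :=
  let s := gpt p in let L := size s in
  let col i := nth 0 (gcol p) i in let row i := nth 0 (grow p) i in
  is_perm s /\ size (gcol p) = L /\ size (grow p) = L /\
  (forall i, i < L -> col i < m /\ row i < n) /\
  (forall i j, i <= j < L -> col i <= col j) /\
  (forall i j, i < L -> j < L -> nth 0 s i < nth 0 s j -> row i <= row j) /\
  (forall i, i < L -> M (col i) (row i) != 0%R) /\
  (forall i j, i < j < L -> col i = col j -> row i = row j ->
     (M (col i) (row i) = 1%R -> nth 0 s i < nth 0 s j) /\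
     (M (col i) (row i) = (-1)%R -> nth 0 s j < nth 0 s i)).

Definition Grid (M : nat -> nat -> int) (m n : nat) (s : seq nat) : Prop :=
  exists p, is_gridded M m n p /\ gpt p = s.

Definition gembeds (p q : gperm) (f : nat -> nat) : Prop :=
  pembeds (gpt p) (gpt q) f /\
  (forall i, i < size (gpt p) ->
     nth 0 (gcol q) (f i) = nth 0 (gcol p) i /\
     nth 0 (grow q) (f i) = nth 0 (grow p) i).

Definition gle (p q : gperm) : Prop := exists f, gembeds p q f.

Definition Cgrid (M : nat -> nat -> int) (m n : nat) (C : seq nat -> Prop)
  (p : gperm) : Prop := is_gridded M m n p /\ C (gpt p).

Definition restrict (p : gperm) (A : bitseq) : gperm :=
  GPerm (std (mask A (gpt p))) (mask A (gcol p)) (mask A (grow p)).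

(* msum c r sg ta pi : pi = sg (+)_M ta, where the points of pi marked by A
   form (a copy of) sg and the others form ta, each in its own cell, and in
   every column (row) all points of sg precede all points of ta in the
   orientation given by c (r). *)
Definition msum (c r : nat -> int) (sg ta pi : gperm) : Prop :=
  exists A : bitseq,
    size A = size (gpt pi) /\
    restrict pi A = sg /\ restrict pi (map negb A) = ta /\
    (forall i j, i < size (gpt pi) -> j < size (gpt pi) ->
       nth false A i -> ~~ nth false A j ->
       let ci := nth 0 (gcol pi) i in let cj := nth 0 (gcol pi) j in
       let ri := nth 0 (grow pi) i in let rj := nth 0 (grow pi) j in
       let yi := nth 0 (gpt pi) i in let yj := nth 0 (gpt pi) j in
       (ci = cj -> (c ci = 1%R -> i < j) /\ (c ci = (-1)%R -> j < i)) /\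
       (ri = rj -> (r ri = 1%R -> yi < yj) /\ (r ri = (-1)%R -> yj < yi))).

Definition Mdivisible (M : nat -> nat -> int) (m n : nat) (c r : nat -> int)
  (pi : gperm) : Prop :=
  exists sg ta, is_gridded M m n sg /\ is_gridded M m n ta /\
    gpt sg <> [::] /\ gpt ta <> [::] /\ msum c r sg ta pi.

Definition quasi_order {A : Type} (le : A -> A -> Prop) : Prop :=
  (forall x, le x x) /\ (forall x y z, le x y -> le y z -> le x z).

Definition wqo_on {A : Type} (S : A -> Prop) (le : A -> A -> Prop) : Prop :=
  forall x : nat -> A, (forall k, S (x k)) ->
    exists i j, i < j /\ le (x i) (x j).

(* L-labelled gridded permutations: (p, lab) with lab i the label of the
   point at position i (values at i >= size are irrelevant). *)
Definition lgle {T : Type} (leT : T -> T -> Prop)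
  (pl ql : gperm * (nat -> T)) : Prop :=
  exists f, gembeds pl.1 ql.1 f /\
    (forall i, i < size (gpt pl.1) -> leT (pl.2 i) (ql.2 (f i))).

Definition labelled_wqo (S : gperm -> Prop) : Prop :=
  forall (T : Type) (leT : T -> T -> Prop),
    quasi_order leT -> wqo_on (fun _ : T => True) leT ->
    wqo_on (fun pl : gperm * (nat -> T) => S pl.1) (lgle leT).

(* Main.v *)
Require Import Defs.
From mathcomp Require Import all_boot all_algebra.
From mathcomp Require Import zify.
From Stdlib Require Import Classical ClassicalEpsilon.
Set Implicit Arguments. Unset Strict Implicit. Unset Printing Implicit Defensive.

Section Higman.
Variables (A : Type) (leA : A -> A -> Prop) (P : A -> Prop).
Hypothesis leA_trans : forall x y z, leA x y -> leA y z -> leA x z.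
Hypothesis wqoA : wqo_on P leA.

Inductive emb : seq A -> seq A -> Prop :=
| emb_nil w : emb [::] w
| emb_skip u b w : emb u w -> emb u (b :: w)
| emb_cons a u b w : leA a b -> emb u w -> emb (a :: u) (b :: w).

Definition allP (w : seq A) := forall a, List.In a w -> P a.
Definition Sw (x : nat -> seq A) := forall k, allP (x k).
Definition badw (x : nat -> seq A) := forall i j, i < j -> ~ emb (x i) (x j).

Definition witness (l : seq (seq A)) (y : nat -> seq A) :=
  Sw y /\ badw y /\ forall k, k < size l -> y k = nth [::] l k.

Definition Good (l : seq (seq A)) (w : seq A) :=
  exists y, witness l y /\ y (size l) = w /\
    forall y', witness l y' -> size w <= size (y' (size l)).

Lemma min_exists (Q : nat -> Prop) : (exists n, Q n) -> exists n, Q n /\ forall m, Q m -> n <= m.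
Proof.
move=> [n Qn].
elim: n {-2}n (leqnn n) Qn => [|N IH] n Hn Qn.
  exists n; split => // m _; move: Hn; rewrite leqn0 => /eqP ->; done.
case: (classic (exists m, Q m /\ m < n)) => [[m [Qm ltm]]|H].
  by apply: (IH m) => //; rewrite -ltnS (leq_trans ltm Hn).
exists n; split => // m Qm; rewrite leqNgt; apply/negP => lt; apply: H; by exists m.
Qed.

Lemma Good_ex l : (exists y, witness l y) -> exists w, Good l w.
Proof.
move=> H.
have H' : exists k, exists y, witness l y /\ size (y (size l)) = k.
  by case: H => y Wy; exists (size (y (size l))), y.
have [k [[y [Wy Ey]] Hmin]] := min_exists H'.
exists (y (size l)); exists y; split => //; split => // y' Wy'; rewrite Ey.
by apply: Hmin; exists y'.
Qed.

Definition F (l : seq (seq A)) : seq A := epsilon (inhabits [::]) (Good l).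

Definition pre (n : nat) : seq (seq A) := iter n (fun l => rcons l (F l)) [::].

Lemma size_pre n : size (pre n) = n.
Proof. by elim: n => //= n IH; rewrite size_rcons IH. Qed.

Lemma nth_pre n k : k < n -> nth [::] (pre n) k = F (pre k).
Proof.
elim: n => // n IH; rewrite ltnS leq_eqVlt => /orP [/eqP ->|lt] /=.
  by rewrite nth_rcons size_pre ltnn eqxx.
by rewrite nth_rcons size_pre lt IH.
Qed.

Hypothesis exbad : exists y, witness [::] y.

Lemma ext_pre n : exists y, witness (pre n) y.
Proof.
elim: n => [|n [y Wy]]; first exact: exbad.
have [w Gw] := Good_ex (ex_intro _ y Wy).
have Gf : Good (pre n) (F (pre n)) by apply: epsilon_spec; exists w.
case: Gf => y' [[S' [B' E']] [Ey' _]].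
exists y'; split => //; split => // k; rewrite /= size_rcons ltnS leq_eqVlt => /orP [/eqP ->|lt].
  by rewrite nth_rcons size_pre ltnn eqxx -Ey' size_pre.
by rewrite nth_rcons lt E'.
Qed.

Definition mbs k := F (pre k).

Lemma Good_pre n : Good (pre n) (mbs n).
Proof. have [y Wy] := ext_pre n; have [w Gw] := Good_ex (ex_intro _ y Wy).
by apply: epsilon_spec; exists w. Qed.

Lemma witness_pre n y : witness (pre n) y <-> (Sw y /\ badw y /\ forall k, k < n -> y k = mbs k).
Proof.
rewrite /witness size_pre; split => [[S1 [B1 E1]]|[S1 [B1 E1]]]; do 2 split => //;
 move=> k lt; by rewrite E1 // nth_pre.
Qed.

Lemma mbs_witness n : witness (pre n) mbs -> True. Proof. done. Qed.

Lemma mbs_S k : allP (mbs k).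
Proof. have [y [[Sy _] [Ey _]]] := Good_pre k. by rewrite -Ey size_pre. Qed.

Lemma mbs_bad : badw mbs.
Proof.
move=> i j lt.
have [y [[Sy [By Ey]] _]] := Good_pre j.+1.
rewrite size_pre in Ey.
have := By i j lt. rewrite Ey ?nth_pre ?Ey ?nth_pre //; [exact: ltn_trans lt _|exact: ltn_trans lt _].
Qed.

Lemma mbs_min n y : Sw y -> badw y -> (forall k, k < n -> y k = mbs k) ->
  size (mbs n) <= size (y n).
Proof.
move=> Sy By Ey.
have [y0 [W0 [E0 Hm]]] := Good_pre n.
rewrite size_pre in E0 Hm. rewrite -E0 in Hm *.
by apply: Hm; apply/witness_pre.
Qed.


Lemma mbs_nonempty n : mbs n <> [::].
Proof. move=> E; apply: (mbs_bad (ltnSn n)); rewrite E; exact: emb_nil. Qed.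

Lemma chain (a : nat -> A) : (forall n, P (a n)) ->
  exists phi : nat -> nat, (forall k, phi k < phi k.+1) /\ (forall k, leA (a (phi k)) (a (phi k.+1))).
Proof.
move=> Pa.
pose term i := forall j, i < j -> ~ leA (a i) (a j).
have [N HN] : exists N, forall i, N <= i -> ~ term i.
  apply: NNPP => H.
  have H' : forall N, exists i, N <= i /\ term i.
    move=> N; apply: NNPP => H2; apply: H; exists N => i Ni Ti; apply: H2; by exists i.
  pose nT N := epsilon (inhabits 0) (fun i => N <= i /\ term i).
  have nTs N : N <= nT N /\ term (nT N) by exact: (epsilon_spec (inhabits 0) (fun i => N <= i /\ term i) (H' N)).
  pose s := fix s k := match k with 0 => nT 0 | k'.+1 => nT (s k').+1 end.
  have sinc : forall k, s k < s k.+1 by move=> k /=; case: (nTs (s k).+1).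
  have [i [j [lt le]]] := wqoA (x := fun k => a (s k)) (fun k => Pa _).
  have := homo_ltn ltn_trans sinc lt.
  have Ts : term (s i) by case: i {lt le} => [|i] /=; [case: (nTs 0)|case: (nTs (s i).+1)].
  by move=> lt'; apply: (Ts _ lt').
have Hn i : N <= i -> exists j, i < j /\ leA (a i) (a j).
  move=> Ni; apply: NNPP => H; apply: (HN i Ni) => j lt le; apply: H; by exists j.
pose nC i := epsilon (inhabits 0) (fun j => i < j /\ leA (a i) (a j)).
have nCs i : N <= i -> i < nC i /\ leA (a i) (a (nC i)) by move=> Ni; exact: (epsilon_spec (inhabits 0) (fun j => i < j /\ leA (a i) (a j)) (Hn i Ni)).
pose phi k := iter k nC N.
have phiN k : N <= phi k.
  elim: k => //= k IH; case: (nCs _ IH) => lt _; exact: leq_trans IH (ltnW lt).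
exists phi; split => k /=; by case: (nCs _ (phiN k)).
Qed.

Lemma no_bad : False.
Proof.
have [a0 _] : exists a0 : A, True by case E: (mbs 0) => [|a0 w]; [case: (mbs_nonempty E)|by exists a0].
pose a n := head a0 (mbs n). pose v n := behead (mbs n).
have Ea n : mbs n = a n :: v n by rewrite /a /v; case E: (mbs n) => //; case: (mbs_nonempty E).
have Pa n : P (a n) by apply: mbs_S; rewrite Ea; left.
have Sv n : allP (v n) by move=> b Hb; apply: (mbs_S (k := n)); rewrite Ea; right.
have [phi [phinc phile]] := chain Pa.
have phiinc := homo_ltn ltn_trans phinc.
have phile' : forall i j, i < j -> leA (a (phi i)) (a (phi j)).
  move=> i j lt; exact: (@homo_ltn nat phi (fun x y => leA (a x) (a y)) (fun y x z => @leA_trans (a x) (a y) (a z)) phile i j lt).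
pose z k := if k < phi 0 then mbs k else v (phi (k - phi 0)).
have Sz : Sw z by move=> k; rewrite /z; case: ifP => _; [exact: mbs_S|exact: Sv].
have nbz : ~ badw z.
  move=> Bz; have := @mbs_min (phi 0) z Sz Bz (fun k lt => ltac:(by rewrite /z lt)).
  by rewrite /z ltnn subnn Ea /= ltnn.
apply: nbz => i j lt Emb.
have phi0 k : phi 0 <= phi k by case: k => // k; exact: ltnW (phiinc _ _ (ltn0Sn k)).
move: Emb; rewrite /z; case: ifP => Hi; case: ifP => Hj.
- exact: mbs_bad lt.
- move=> E; apply: (mbs_bad (i := i) (j := phi (j - phi 0))).
    exact: leq_trans Hi (phi0 _).
  rewrite (Ea (phi (j - phi 0))); apply: emb_skip; exact: E.
- by move: (ltn_trans lt Hj); rewrite Hi.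
- move=> E; have lt' : i - phi 0 < j - phi 0.
    move/negbT: Hi; move/negbT: Hj; rewrite -!leqNgt; lia.
  apply: (mbs_bad (phiinc _ _ lt')); rewrite !Ea; apply: emb_cons => //; exact: phile'.
Qed.

End Higman.

Theorem higman (A : Type) (leA : A -> A -> Prop) (P : A -> Prop) :
  (forall x y z, leA x y -> leA y z -> leA x z) -> wqo_on P leA ->
  wqo_on (allP P) (emb leA).
Proof.
move=> tr wq x Sx; apply: NNPP => H.
apply: (@no_bad A leA P tr wq); exists x; split => //; split => // i j lt E.
apply: H; by exists i, j.
Qed.


Fixpoint idx (B : bitseq) : seq nat :=
  match B with
  | [::] => [::]
  | b :: B' => if b then 0 :: map succn (idx B') else map succn (idx B')
  end.

Lemma size_idx B : size (idx B) = count id B.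
Proof. by elim: B => //= b B IH; case: b => /=; rewrite size_map IH. Qed.

Lemma mem_idx B p : (p \in idx B) = (p < size B) && nth false B p.
Proof.
elim: B p => [|b B IH] p //=.
have E : (p \in [seq q.+1 | q <- idx B]) = (p != 0) && (p.-1 \in idx B).
  case: p => [|p] /=; first by apply/negbTE; apply/mapP => -[].
  by rewrite (mem_map succn_inj).
case: b; rewrite ?inE E; case: p {E} => [|p] //=; by rewrite IH.
Qed.

Lemma sorted_idx B : sorted ltn (idx B).
Proof.
elim: B => //= b B IH.
have Hm : sorted ltn (map succn (idx B)) by rewrite (sorted_map) /=; exact: IH.
case: b => //=; move: Hm; case: (idx B) => //= x s ->; by rewrite andbT.
Qed.

Lemma idx_lt B i j : i < j < size (idx B) -> nth 0 (idx B) i < nth 0 (idx B) j.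
Proof.
move=> /andP [ij js]; apply: (sorted_ltn_nth ltn_trans 0 (sorted_idx B)) => //.
  by rewrite inE (ltn_trans ij js).
Qed.

Lemma idx_le B i j : i <= j < size (idx B) -> nth 0 (idx B) i <= nth 0 (idx B) j.
Proof.
move=> /andP []; rewrite leq_eqVlt => /orP [/eqP -> //|ij] js.
by apply: ltnW; apply: idx_lt; rewrite ij js.
Qed.

Lemma idx_lt_inv B i j : i < size (idx B) -> j < size (idx B) ->
  nth 0 (idx B) i < nth 0 (idx B) j -> i < j.
Proof.
move=> iS js lt; rewrite ltnNge; apply/negP => ji.
have := idx_le (B := B) (i := j) (j := i); rewrite ji iS => /(_ isT).
by rewrite leqNgt lt.
Qed.

Lemma nth_idx_mem B t : t < count id B -> nth 0 (idx B) t \in idx B.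
Proof. by move=> lt; apply: mem_nth; rewrite size_idx. Qed.

Lemma nth_idx_lt B t : t < count id B -> nth 0 (idx B) t < size B.
Proof. by move=> /nth_idx_mem; rewrite mem_idx => /andP []. Qed.

Lemma nth_idx_true B t : t < count id B -> nth false B (nth 0 (idx B) t).
Proof. by move=> /nth_idx_mem; rewrite mem_idx => /andP []. Qed.

Lemma mask_idx (T : Type) (x0 : T) B (s : seq T) : size B = size s ->
  mask B s = map (nth x0 s) (idx B).
Proof.
elim: B s => [|b B IH] [|x s] //= [E]; rewrite (IH _ E).
by case: b => /=; rewrite -map_comp.
Qed.

Lemma nth_mask_idx (T : Type) (x0 : T) B (s : seq T) t : size B = size s ->
  t < count id B -> nth x0 (mask B s) t = nth x0 s (nth 0 (idx B) t).
Proof. by move=> E lt; rewrite (mask_idx x0 E) (nth_map 0) // size_idx. Qed.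

Fixpoint expand (A B : bitseq) : bitseq :=
  match A with
  | [::] => [::]
  | a :: A' => if a then
                 match B with
                 | [::] => false :: expand A' [::]
                 | b :: B' => b :: expand A' B'
                 end
               else false :: expand A' B
  end.

Lemma size_expand A B : size (expand A B) = size A.
Proof. by elim: A B => //= a A IH [|b B]; case: a => /=; rewrite IH. Qed.

Lemma idx_expand A B : idx (expand A B) = mask B (idx A).
Proof.
elim: A B => [|a A IH] B /=; first by case: B.
case: a => /=.
  case: B => [|b B] /=; first by rewrite IH /=; case: (idx A).
  by case: b; rewrite IH map_mask.
by rewrite IH map_mask.
Qed.

Lemma nth_expand A B p : p < size A ->
  nth false (expand A B) p = nth false A p && nth false B (count id (take p A)).
Proof.
elim: A B p => [|a A IH] B p //=.
case: a => /=.
  case: B => [|b B]; case: p => [|p] //= lt; rewrite IH //; by case: (count _ _).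
case: p => [|p] //= lt; by rewrite IH.
Qed.

Definition rank (A : bitseq) (p : nat) := count id (take p A).

Lemma idx_rank A p : p < size A -> nth false A p ->
  rank A p < count id A /\ nth 0 (idx A) (rank A p) = p.
Proof.
elim: A p => [|a A IH] p //=.
case: p => [|p] /=.
  by move=> _ ->; rewrite /rank /=.
rewrite ltnS => lt Hp; have [IH1 IH2] := IH p lt Hp.
rewrite /rank /= in IH1 IH2 *; case: a => /=.
  by rewrite add1n ltnS IH1 /= (nth_map 0) ?IH2 // size_idx.
by rewrite add0n IH1 (nth_map 0) ?IH2 // size_idx.
Qed.

Lemma nth_negb (A : bitseq) p : p < size A -> nth false (map negb A) p = ~~ nth false A p.
Proof. by move=> lt; rewrite (nth_map false). Qed.

Lemma cnt_lt (s : seq nat) a b : a \in s -> a < b ->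
  count (fun u => u < a) s < count (fun u => u < b) s.
Proof.
elim: s => //= x s IH; rewrite inE => /orP [/eqP <-|ins] ab.
  rewrite ltnn add0n -addn1 addnC leq_add //; first by rewrite ab.
  by apply: sub_count => u /= ua; exact: ltn_trans ua ab.
have := IH ins ab; have : (x < a) <= (x < b).
  by case: (ltnP x a) => // xa; rewrite (ltn_trans xa ab).
lia.
Qed.

Lemma cnt_le (s : seq nat) a b : a <= b ->
  count (fun u => u < a) s <= count (fun u => u < b) s.
Proof. by move=> ab; apply: sub_count => u /= ua; exact: leq_trans ua ab. Qed.

Lemma nth_std s i : i < size s -> nth 0 (std s) i = count (fun u => u < nth 0 s i) s.
Proof. by move=> lt; rewrite /std (nth_map 0). Qed.

Lemma size_std s : size (std s) = size s.
Proof. by rewrite /std size_map. Qed.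

Lemma std_lt s i j : i < size s -> j < size s ->
  (nth 0 (std s) i < nth 0 (std s) j) = (nth 0 s i < nth 0 s j).
Proof.
move=> iS js; rewrite !nth_std //.
case: (ltnP (nth 0 s i) (nth 0 s j)) => H.
  by rewrite cnt_lt // mem_nth.
by apply/negbTE; rewrite -leqNgt; apply: cnt_le.
Qed.

Lemma std_map (phi : nat -> nat) s :
  {in s &, forall x y, x < y -> phi x < phi y} -> std (map phi s) = std s.
Proof.
move=> H; rewrite /std -map_comp; apply/eq_in_map => v vs /=.
rewrite count_map; apply: eq_in_count => u us /=.
case: (ltnP u v) => uv; first by rewrite H.
apply/negbTE; rewrite -leqNgt; move: uv; rewrite leq_eqVlt => /orP [/eqP ->//|lt].
by apply: ltnW; apply: H.
Qed.

Lemma std_mask_std B s : std (mask B (std s)) = std (mask B s).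
Proof.
have -> : std s = map (fun v => count (fun u => u < v) s) s by [].
rewrite -map_mask std_map // => x y xs ys xy.
by apply: cnt_lt => //; apply: mem_mask xs.
Qed.

Lemma cnt_iota v L : v <= L -> count (fun u => u < v) (iota 0 L) = v.
Proof.
move=> vL; rewrite -(subnKC vL) iotaD count_cat add0n.
rewrite (eq_in_count (a2 := predT)); last by move=> u; rewrite mem_iota.
rewrite count_predT size_iota (eq_in_count (a2 := pred0)); last first.
  by move=> u; rewrite mem_iota /= => /andP [H _]; apply/negbTE; rewrite -leqNgt.
by rewrite count_pred0 addn0.
Qed.

Lemma cnt_perm s v : is_perm s -> v <= size s -> count (fun u => u < v) s = v.
Proof.
move=> Hp vL.
have E : count (fun u => u < v) s = count (fun u => u < v) (iota 0 (size s)).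
  by move/permP: Hp => H; apply: H.
by rewrite E cnt_iota.
Qed.
Lemma perm_lt s v : is_perm s -> v \in s -> v < size s.
Proof.
move=> Hp vs. have := perm_mem Hp v. rewrite vs mem_iota add0n /=. by move=> <-.
Qed.
Lemma std_perm s : is_perm s -> std s = s.
Proof.
move=> Hp; apply: (@eq_from_nth _ 0); rewrite size_std // => i lt.
rewrite nth_std // cnt_perm // ltnW // perm_lt // mem_nth //.
Qed.

Lemma std_is_perm s : uniq s -> is_perm (std s).
Proof.
move=> us.
have inj : {in s &, injective (fun v => count (fun u => u < v) s)}.
  move=> x y xs ys /= E; apply/eqP; rewrite eqn_leq; apply/andP; split; rewrite leqNgt; apply/negP => lt.
    by have := cnt_lt ys lt; rewrite E ltnn.
  by have := cnt_lt xs lt; rewrite E ltnn.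
have ust : uniq (std s) by rewrite /std map_inj_in_uniq.
rewrite /is_perm; apply: uniq_perm => //; first exact: iota_uniq.
have sub : {subset std s <= iota 0 (size (std s))}.
  move=> v /mapP [w ws ->]; rewrite mem_iota add0n size_std.
  rewrite -(count_predC (fun u => u < w) s) -addn1 leq_add2l.
  by rewrite -has_count; apply/hasP; exists w => //=; rewrite ltnn.
have Hs : size (iota 0 (size (std s))) <= size (std s) by rewrite size_iota.
exact: (uniq_min_size ust sub Hs).2.
Qed.

Lemma perm_uniq_s s : is_perm s -> uniq s.
Proof. by move=> Hp; rewrite (perm_uniq Hp) iota_uniq. Qed.

Lemma mask_mask (T : Type) (x0 : T) A B (s : seq T) : size A = size s ->
  mask B (mask A s) = mask (expand A B) s.
Proof.
move=> E; rewrite (mask_idx x0 E) -map_mask -idx_expand (mask_idx x0) //.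
by rewrite size_expand.
Qed.

Section Grid.
Variables (M : nat -> nat -> int) (m n : nat).

Lemma restrict_gridded pi B : is_gridded M m n pi -> size B = size (gpt pi) ->
  is_gridded M m n (restrict pi B).
Proof.
case: pi => s cl rw; rewrite /is_gridded /restrict /=.
move=> [Hp [Sc [Sr [Hb [Hc [Hr [Hz Hcell]]]]]]] SB.
have Sc' : size B = size cl by rewrite SB Sc.
have Sr' : size B = size rw by rewrite SB Sr.
rewrite size_std (size_mask SB).
have P t : t < count id B -> nth 0 (idx B) t < size s by move=> lt; rewrite -SB nth_idx_lt.
have Ns t : t < count id B -> nth 0 (mask B s) t = nth 0 s (nth 0 (idx B) t) by move=> lt; rewrite nth_mask_idx.
have Nc t : t < count id B -> nth 0 (mask B cl) t = nth 0 cl (nth 0 (idx B) t) by move=> lt; rewrite nth_mask_idx.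
have Nr t : t < count id B -> nth 0 (mask B rw) t = nth 0 rw (nth 0 (idx B) t) by move=> lt; rewrite nth_mask_idx.
have Sm : size (mask B s) = count id B by rewrite size_mask.
have Lt t u : t < count id B -> u < count id B ->
   (nth 0 (std (mask B s)) t < nth 0 (std (mask B s)) u) = (nth 0 s (nth 0 (idx B) t) < nth 0 s (nth 0 (idx B) u)).
  by move=> tl ul; rewrite std_lt ?Sm // !Ns.
split; first by apply: std_is_perm; apply: mask_uniq; exact: perm_uniq_s.
split; first by rewrite size_mask.
split; first by rewrite size_mask.
split; first by move=> t lt; rewrite Nc // Nr //; apply: Hb; exact: P.
split.
  move=> t u /andP [tu ul]; have tl := leq_ltn_trans tu ul.
  by rewrite !Nc //; apply: Hc; rewrite P // andbT; apply: idx_le; rewrite size_idx tu ul.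
split.
  by move=> t u tl ul; rewrite Lt // !Nr //; apply: Hr; exact: P.
split; first by move=> t tl; rewrite Nc // Nr //; apply: Hz; exact: P.
move=> t u /andP [tu ul]; have tl := ltn_trans tu ul.
rewrite !Nc // !Nr // => Ec Er.
assert (Hpq : nth 0 (idx B) t < nth 0 (idx B) u < size s).
  by rewrite P // andbT; apply: idx_lt; rewrite size_idx tu ul.
have [H1 H2] := Hcell _ _ Hpq Ec Er.
by rewrite !Lt //.
Qed.

Lemma restrict_le pi B : is_perm (gpt pi) -> size B = size (gpt pi) ->
  perm_le (gpt (restrict pi B)) (gpt pi).
Proof.
case: pi => s cl rw /= Hp SB; exists (nth 0 (idx B)).
have Sm : size (mask B s) = count id B by rewrite size_mask.
rewrite /pembeds size_std Sm; split.
  by move=> i j /andP [ij jl]; apply: idx_lt; rewrite ij size_idx.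
split; first by move=> i il; rewrite -SB nth_idx_lt.
by move=> i j il jl; rewrite std_lt ?Sm // !nth_mask_idx.
Qed.

Lemma restrict_restrict pi A B : size A = size (gpt pi) ->
  size (gcol pi) = size (gpt pi) -> size (grow pi) = size (gpt pi) ->
  restrict (restrict pi A) B = restrict pi (expand A B).
Proof.
case: pi => s cl rw /= SA Sc Sr; rewrite /restrict /=.
rewrite std_mask_std !(mask_mask 0) //; congruence.
Qed.

Lemma restrict_full pi : is_gridded M m n pi ->
  restrict pi (nseq (size (gpt pi)) true) = pi.
Proof.
case: pi => s cl rw [/= Hp [Sc [Sr _]]]; rewrite /restrict /=.
by rewrite !mask_true ?Sc ?Sr // std_perm.
Qed.


Variables (c r : nat -> int).

Definition crossP (s cl rw : seq nat) (i j : nat) : Prop :=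
  let ci := nth 0 cl i in let cj := nth 0 cl j in
  let ri := nth 0 rw i in let rj := nth 0 rw j in
  let yi := nth 0 s i in let yj := nth 0 s j in
  (ci = cj -> (c ci = 1%R -> i < j) /\ (c ci = (-1)%R -> j < i)) /\
  (ri = rj -> (r ri = 1%R -> yi < yj) /\ (r ri = (-1)%R -> yj < yi)).

Definition Xc (pi : gperm) (beta : nat -> nat) : Prop :=
  forall i j, i < size (gpt pi) -> j < size (gpt pi) -> beta i < beta j ->
    crossP (gpt pi) (gcol pi) (grow pi) i j.

Definition bmask (pi : gperm) (beta : nat -> nat) (j : nat) : bitseq :=
  mkseq (fun p => beta p == j) (size (gpt pi)).

Definition decomp (pi : gperm) (k : nat) (beta : nat -> nat) : Prop :=
  (forall p, p < size (gpt pi) -> beta p < k) /\ Xc pi beta /\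
  (forall j, j < k -> ~ Mdivisible M m n c r (restrict pi (bmask pi beta j))).

Lemma crossP_restrict pi B t u :
  size B = size (gpt pi) -> size (gcol pi) = size (gpt pi) -> size (grow pi) = size (gpt pi) ->
  t < count id B -> u < count id B ->
  crossP (gpt (restrict pi B)) (gcol (restrict pi B)) (grow (restrict pi B)) t u ->
  crossP (gpt pi) (gcol pi) (grow pi) (nth 0 (idx B) t) (nth 0 (idx B) u).
Proof.
case: pi => s cl rw /= SB Sc Sr tl ul.
have Sc' : size B = size cl by rewrite SB Sc.
have Sr' : size B = size rw by rewrite SB Sr.
have Sm : size (mask B s) = count id B by rewrite size_mask.
have Ltv : (nth 0 (std (mask B s)) t < nth 0 (std (mask B s)) u) = (nth 0 s (nth 0 (idx B) t) < nth 0 s (nth 0 (idx B) u)).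
  by rewrite std_lt ?Sm // !nth_mask_idx.
have Ltv' : (nth 0 (std (mask B s)) u < nth 0 (std (mask B s)) t) = (nth 0 s (nth 0 (idx B) u) < nth 0 s (nth 0 (idx B) t)).
  by rewrite std_lt ?Sm // !nth_mask_idx.
have tu : t < u -> nth 0 (idx B) t < nth 0 (idx B) u by move=> H; apply: idx_lt; rewrite H size_idx.
have ut : u < t -> nth 0 (idx B) u < nth 0 (idx B) t by move=> H; apply: idx_lt; rewrite H size_idx.
rewrite /crossP /restrict /= !(nth_mask_idx 0 Sc') // !(nth_mask_idx 0 Sr') // Ltv Ltv'.
move=> [H1 H2]; split => E.
  by have [H3 H4] := H1 E; split => H; [apply: tu; apply: H3|apply: ut; apply: H4].
exact: (H2 E).
Qed.

Lemma count_negb (A : bitseq) : count id A + count id (map negb A) = size A.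
Proof. by rewrite count_map -(count_predC id A). Qed.

Lemma decomp_exists N : forall pi, size (gpt pi) < N -> is_gridded M m n pi ->
  exists k beta, decomp pi k beta.
Proof.
elim: N => [|N IH] pi //; rewrite ltnS => LN Gpi.
have [Hp [Sc [Sr _]]] := Gpi.
case: (classic (Mdivisible M m n c r pi)) => [Div|NDiv]; last first.
  exists 1, (fun _ => 0); split; first by [].
  split; first by move=> i j _ _; rewrite ltnn.
  move=> j; rewrite ltnS leqn0 => /eqP ->.
  have -> : bmask pi (fun _ => 0) 0 = nseq (size (gpt pi)) true.
    by apply: (@eq_from_nth _ false); rewrite ?size_mkseq ?size_nseq // => i lt; rewrite nth_mkseq // nth_nseq lt.
  by rewrite restrict_full.
have [sg [ta [Gs [Gt [nes [net [A [SA [Rs [Rt Cond]]]]]]]]]] := Div.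
set L := size (gpt pi).
have SnA : size (map negb A) = L by rewrite size_map.
have Ssg : size (gpt sg) = count id A by rewrite -Rs /restrict /= size_std size_mask.
have Sta : size (gpt ta) = count id (map negb A) by rewrite -Rt /restrict /= size_std size_mask.
have CA := count_negb A; rewrite SA -/L in CA.
have ps : 0 < count id A by rewrite -Ssg lt0n size_eq0; apply/eqP; exact: nes.
have pt : 0 < count id (map negb A) by rewrite -Sta lt0n size_eq0; apply/eqP; exact: net.
have [k1 [b1 [Db1 [Xb1 Nb1]]]] := IH sg (ltac:(rewrite Ssg; lia)) Gs.
have [k2 [b2 [Db2 [Xb2 Nb2]]]] := IH ta (ltac:(rewrite Sta; lia)) Gt.
pose beta p := if nth false A p then b1 (rank A p) else k1 + b2 (rank (map negb A) p).
have RA p : p < L -> nth false A p -> rank A p < count id A /\ nth 0 (idx A) (rank A p) = p.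
  by move=> lt Ap; apply: idx_rank => //; rewrite SA.
have RnA p : p < L -> ~~ nth false A p -> rank (map negb A) p < count id (map negb A) /\
     nth 0 (idx (map negb A)) (rank (map negb A) p) = p.
  by move=> lt Ap; apply: idx_rank; rewrite ?SnA // nth_negb // SA.
exists (k1 + k2), beta; split.
  move=> p lt; rewrite /beta; case: ifP => Ap.
    have [R1 _] := RA p lt Ap; have := Db1 (rank A p) (ltac:(by rewrite Ssg)); lia.
  have [R1 _] := RnA p lt (negbT Ap); have := Db2 _ (ltac:(by rewrite Sta; exact: R1)); lia.
split.
  move=> p q pl ql; rewrite /beta; case: ifP => Ap; case: ifP => Aq => lt.
  - have [R1 R2] := RA p pl Ap; have [R3 R4] := RA q ql Aq.
    rewrite -R2 -R4; apply: crossP_restrict => //; rewrite Rs; apply: Xb1 => //; by rewrite Ssg.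
  - by apply: Cond => //; rewrite Aq.
  - have := Db1 (rank A q) (ltac:(rewrite Ssg; exact: (RA q ql Aq).1)); lia.
  - have [R1 R2] := RnA p pl (negbT Ap); have [R3 R4] := RnA q ql (negbT Aq).
    rewrite -R2 -R4; apply: crossP_restrict => //.
    rewrite Rt; apply: Xb2 => //; rewrite ?Sta //; lia.
move=> j jk; case: (ltnP j k1) => jk1.
  have -> : bmask pi beta j = expand A (bmask sg b1 j).
    apply: (@eq_from_nth _ false); rewrite ?size_mkseq ?size_expand ?SA // => p pl.
    rewrite nth_mkseq // nth_expand ?SA // /beta; case: ifP => Ap /=.
      have [R1 _] := RA p pl Ap; by rewrite nth_mkseq // Ssg.
    by apply/negbTE; lia.
  rewrite -restrict_restrict // Rs; exact: Nb1.
have -> : bmask pi beta j = expand (map negb A) (bmask ta b2 (j - k1)).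
  apply: (@eq_from_nth _ false); rewrite ?size_mkseq ?size_expand ?SnA // => p pl.
  rewrite nth_mkseq // nth_expand ?SnA // nth_negb ?SA // /beta; case: ifP => Ap /=.
    have [R1 _] := RA p pl Ap; have := Db1 (rank A p) (ltac:(by rewrite Ssg)).
    by move=> H; apply/negbTE; lia.
  have [R1 _] := RnA p pl (negbT Ap); rewrite nth_mkseq ?Sta //.
  by rewrite /rank; apply/eqP/eqP => H; lia.
rewrite -restrict_restrict ?SnA // Rt; apply: Nb2; lia.
Qed.

End Grid.

Section Lift.
Variables (M : nat -> nat -> int) (m n : nat) (c r : nat -> int).
Hypothesis Hsg : pm_signs M m n c r.

Definition letter (T : Type) (pi : gperm) (lab : nat -> T) (beta : nat -> nat) (j : nat)
  : gperm * (nat -> T) :=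
  (restrict pi (bmask pi beta j), fun t => lab (nth 0 (idx (bmask pi beta j)) t)).

Lemma size_restrict pi B : size B = size (gpt pi) ->
  size (gpt (restrict pi B)) = count id B.
Proof. by move=> SB; rewrite /restrict /= size_std size_mask. Qed.

Lemma lift (T : Type) (leT : T -> T -> Prop) pi rho lab lab' k k' beta gamma g :
  is_gridded M m n pi -> is_gridded M m n rho ->
  decomp M m n c r pi k beta -> decomp M m n c r rho k' gamma ->
  (forall i j, i < j < k -> g i < g j) ->
  (forall j, j < k -> lgle leT (letter pi lab beta j) (letter rho lab' gamma (g j))) ->
  lgle leT (pi, lab) (rho, lab').
Proof.
move=> Gpi Grho [Db [Xb _]] [_ [Xg _]] ginc Hl.
have [Hc [Hr _]] := Hsg.
case: pi Gpi Db Xb Hl => s cl rw Gpi Db Xb Hl.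
case: rho Grho Xg Hl => s' cl' rw' Grho Xg Hl.
have [Hp [Sc [Sr [Hb [Hcm [Hrm _]]]]]] := Gpi.
have [Hp' [Sc' [Sr' [Hb' [Hcm' [Hrm' _]]]]]] := Grho.
rewrite /= in Sc Sr Hb Hcm Hrm Sc' Sr' Hb' Hcm' Hrm' Db Xb Xg.
set L := size s in Sc Sr Hb Hcm Hrm Db Xb.
set L' := size s' in Sc' Sr' Hb' Hcm' Hrm' Xg.
pose B j := bmask (GPerm s cl rw) beta j.
pose B' j := bmask (GPerm s' cl' rw') gamma j.
pose P j h := gembeds (restrict (GPerm s cl rw) (B j)) (restrict (GPerm s' cl' rw') (B' (g j))) h /\
    (forall i, i < count id (B j) -> leT (lab (nth 0 (idx (B j)) i)) (lab' (nth 0 (idx (B' (g j))) (h i)))).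
have HexP j : exists h, j < k -> P j h.
  case: (ltnP j k) => jk; last by exists id.
  have [h [Hh1 Hh2]] := Hl j jk; exists h => _; split => // i il; apply: Hh2.
  by rewrite /letter /= size_std size_mask // size_mkseq.
pose H j := epsilon (inhabits id) (fun h => j < k -> P j h).
have HP j : j < k -> P j (H j) by move=> jk; exact: (epsilon_spec (inhabits id) (fun h => j < k -> P j h) (HexP j) jk).
have SB j : size (B j) = L by rewrite size_mkseq.
have SB' j : size (B' j) = L' by rewrite size_mkseq.
have SBc j : size (B j) = size cl by rewrite SB.
have SBr j : size (B j) = size rw by rewrite SB.
have SBc' j : size (B' j) = size cl' by rewrite SB'.
have SBr' j : size (B' j) = size rw' by rewrite SB'.
have SBs j : size (B j) = size s by rewrite SB.
have SBs' j : size (B' j) = size s' by rewrite SB'.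
pose f p := nth 0 (idx (B' (g (beta p)))) (H (beta p) (rank (B (beta p)) p)).
have Bp p : p < L -> rank (B (beta p)) p < count id (B (beta p)) /\ nth 0 (idx (B (beta p))) (rank (B (beta p)) p) = p.
  move=> pl; apply: idx_rank; first by rewrite SB.
  by rewrite nth_mkseq.
have Hpt p : p < L -> [/\ f p < L', gamma (f p) = g (beta p), nth 0 cl' (f p) = nth 0 cl p,
                           nth 0 rw' (f p) = nth 0 rw p & leT (lab p) (lab' (f p))].
  move=> pl; have [R1 R2] := Bp p pl; have jk := Db p pl.
  have [[[Pinc [Prng Pord]] Pcell] Plab] := HP _ jk.
  rewrite /= size_std size_mask // in Pinc Prng Pord Pcell.
  have Ht := Prng _ R1; rewrite size_std size_mask // in Ht.
  have [E1 E2] := Pcell _ R1.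
  rewrite !nth_mask_idx // R2 in E1 E2.
  split.
  - by have := nth_idx_lt Ht; rewrite SB'.
  - have := nth_idx_true Ht; rewrite nth_mkseq; first by move/eqP.
    by have := nth_idx_lt Ht; rewrite SB'.
  - by rewrite -E1.
  - by rewrite -E2.
  - have := Plab _ R1; by rewrite R2.
have Hsame p q : p < L -> q < L -> beta p = beta q ->
    (p < q -> f p < f q) /\ ((nth 0 s p < nth 0 s q) = (nth 0 s' (f p) < nth 0 s' (f q))).
  move=> pl ql E; have [R1 R2] := Bp p pl; have [R3 R4] := Bp q ql.
  rewrite /f E; rewrite E in R1 R2.
  set j := beta q in R1 R2 R3 R4 *.
  have jk : j < k by exact: Db.
  have [[[Pinc [Prng Pord]] Pcell] Plab] := HP _ jk.
  rewrite /= size_std size_mask // in Pinc Prng Pord Pcell.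
  have Ht := Prng _ R1; have Hu := Prng _ R3; rewrite size_std size_mask // in Ht Hu.
  split.
    move=> pq; apply: idx_lt; rewrite size_idx Hu andbT; apply: Pinc.
    rewrite R3 andbT; apply: (idx_lt_inv (B := B j)); rewrite ?size_idx ?R2 ?R4 //.
  rewrite -{1}R2 -{1}R4 -!(nth_mask_idx 0 (SBs j)) // -std_lt ?size_mask // Pord //.
  by rewrite std_lt ?size_mask // !nth_mask_idx.
have ginj i j : i < k -> j < k -> i <> j -> g i <> g j.
  move=> ik jk ij E; case: (ltngtP i j) => H'.
  - by have := ginc i j; rewrite H' jk E ltnn => /(_ isT).
  - by have := ginc j i; rewrite H' ik E ltnn => /(_ isT).
  - by apply: ij.
have fneq p q : p < L -> q < L -> beta p <> beta q -> f p <> f q.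
  move=> pl ql E Ef; have [_ G1 _ _ _] := Hpt p pl; have [_ G2 _ _ _] := Hpt q ql.
  by apply: (ginj _ _ (Db p pl) (Db q ql) E); rewrite -G1 -G2 Ef.
have us' := perm_uniq_s Hp'.
have us := perm_uniq_s Hp.
have Lcross p q : p < L -> q < L -> beta p < beta q -> g (beta p) < g (beta q).
  move=> pl ql lt; apply: ginc; by rewrite lt Db.
have Xcross p q : p < q -> q < L -> beta p <> beta q -> f p < f q.
  move=> pq ql E; have pl := ltn_trans pq ql.
  have [F1 G1 C1 _ _] := Hpt p pl; have [F2 G2 C2 _ _] := Hpt q ql.
  have cm : nth 0 cl p <= nth 0 cl q by apply: Hcm; rewrite ltnW.
  case: (ltngtP (nth 0 cl p) (nth 0 cl q)) => Ec.
  - rewrite ltnNge; apply/negP => le.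
    have := Hcm' (f q) (f p); rewrite le F1 C1 C2 => /(_ isT); by rewrite leqNgt Ec.
  - by move: cm; rewrite leqNgt Ec.
  - have cpm : nth 0 cl p < m by case: (Hb p pl).
    have /orP [/eqP c1|/eqP c1] := Hc _ cpm.
    + case: (ltngtP (beta p) (beta q)) => Eb; last by [].
      * have [X1 _] := Xg (f p) (f q) F1 F2 (ltac:(rewrite G1 G2; exact: Lcross)).
        by apply: (X1 (ltac:(by rewrite C1 C2))).1; rewrite C1.
      * have [X1 _] := Xb q p ql pl Eb.
        have := (X1 (esym Ec)).1; rewrite -Ec c1 => /(_ erefl); by rewrite ltnNge ltnW.
    + case: (ltngtP (beta p) (beta q)) => Eb; last by [].
      * have [X1 _] := Xb p q pl ql Eb.
        have := (X1 Ec).2; rewrite c1 => /(_ erefl); by rewrite ltnNge ltnW.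
      * have [X1 _] := Xg (f q) (f p) F2 F1 (ltac:(rewrite G1 G2; exact: Lcross)).
        by apply: (X1 (ltac:(by rewrite C1 C2))).2; rewrite C2 -Ec.
have Ycross p q : p < L -> q < L -> beta p <> beta q -> nth 0 s p < nth 0 s q ->
    nth 0 s' (f p) < nth 0 s' (f q).
  move=> pl ql E lt.
  have [F1 G1 _ R1 _] := Hpt p pl; have [F2 G2 _ R2 _] := Hpt q ql.
  have rm : nth 0 rw p <= nth 0 rw q by apply: Hrm.
  have dist : nth 0 s' (f p) != nth 0 s' (f q).
    by rewrite nth_uniq //; apply/eqP; apply: fneq.
  case: (ltngtP (nth 0 rw p) (nth 0 rw q)) => Er.
  - rewrite ltnNge leq_eqVlt eq_sym (negbTE dist) /=; apply/negP => lt'.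
    have := Hrm' (f q) (f p) F2 F1 lt'; by rewrite R1 R2 leqNgt Er.
  - by move: rm; rewrite leqNgt Er.
  - have rpm : nth 0 rw p < n by case: (Hb p pl).
    have /orP [/eqP r1|/eqP r1] := Hr _ rpm.
    + case: (ltngtP (beta p) (beta q)) => Eb; last by [].
      * have [_ X1] := Xg (f p) (f q) F1 F2 (ltac:(rewrite G1 G2; exact: Lcross)).
        by apply: (X1 (ltac:(by rewrite R1 R2))).1; rewrite R1.
      * have [_ X1] := Xb q p ql pl Eb.
        have := (X1 (esym Er)).1; rewrite -Er r1 => /(_ erefl); by rewrite ltnNge ltnW.
    + case: (ltngtP (beta p) (beta q)) => Eb; last by [].
      * have [_ X1] := Xb p q pl ql Eb.
        have := (X1 Er).2; rewrite r1 => /(_ erefl); by rewrite ltnNge ltnW.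
      * have [_ X1] := Xg (f q) (f p) F2 F1 (ltac:(rewrite G1 G2; exact: Lcross)).
        by apply: (X1 (ltac:(by rewrite R1 R2))).2; rewrite R2 -Er.
exists f; split; last first.
  by move=> i il; have [_ _ _ _ H5] := Hpt i il.
rewrite /gembeds /=; split; last first.
  by move=> i il; have [_ _ H3 H4 _] := Hpt i il.
split.
  move=> i j /andP [ij jl]; have il := ltn_trans ij jl.
  case: (eqVneq (beta i) (beta j)) => E; first by apply: (Hsame i j il jl E).1.
  by apply: Xcross => //; apply/eqP.
split; first by move=> i il; case: (Hpt i il).
move=> i j il jl.
case: (eqVneq (beta i) (beta j)) => E; first by apply: (Hsame i j il jl E).2.
have E' : beta i <> beta j by apply/eqP.
case: (ltnP (nth 0 s i) (nth 0 s j)) => lt.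
  by rewrite Ycross.
have ne : nth 0 s i != nth 0 s j.
  rewrite nth_uniq //; apply/eqP => ij; apply: E'; by rewrite ij.
have lt' : nth 0 s j < nth 0 s i by rewrite ltn_neqAle eq_sym ne lt.
symmetry; apply/negbTE; rewrite -leqNgt ltnW //; apply: Ycross => //; by move=> e; apply: E'.
Qed.

End Lift.

Lemma emb_idx (A : Type) (leA : A -> A -> Prop) (d : A) u w : emb leA u w ->
  exists g : nat -> nat, (forall i j, i < j < size u -> g i < g j) /\
    (forall i, i < size u -> g i < size w /\ leA (nth d u i) (nth d w (g i))).
Proof.
elim => [w0|u0 b w0 _ [g [G1 G2]]|a u0 b w0 ab _ [g [G1 G2]]].
- by exists id; split => [i j|i]; rewrite /= ?ltn0 ?andbF.
- exists (fun i => (g i).+1); split; first by move=> i j H; rewrite ltnS G1.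
  by move=> i il; have [H1 H2] := G2 i il; rewrite /= ltnS H1.
- exists (fun i => if i is i'.+1 then (g i').+1 else 0); split.
    by move=> [|i] [|j] //= /andP [ij jl]; rewrite ltnS; apply: G1; apply/andP; split.
  move=> [|i] //= il; have [H1 H2] := G2 i il; by rewrite ltnS H1.
Qed.

Lemma lgle_trans (T : Type) (leT : T -> T -> Prop) :
  (forall x y z, leT x y -> leT y z -> leT x z) ->
  forall x y z, lgle leT x y -> lgle leT y z -> lgle leT x z.
Proof.
move=> tr [p lp] [q lq] [s ls] [f1 [[[I1 [R1 O1]] C1] L1]] [f2 [[[I2 [R2 O2]] C2] L2]].
rewrite /= in I1 R1 O1 C1 L1 I2 R2 O2 C2 L2.
exists (fun i => f2 (f1 i)); split; last first.
  by move=> i il; apply: tr (L1 i il) (L2 _ (R1 i il)).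
split; last first.
  by move=> i il; have [E1 E2] := C1 i il; have [E3 E4] := C2 _ (R1 i il); rewrite E3 E4.
split.
  move=> i j /andP [ij jl]; apply: I2; rewrite I1 ?ij //.
  exact: R1.
split; first by move=> i il; apply: R2; exact: R1.
by move=> i j il jl; rewrite O1 // O2 //; exact: R1.
Qed.

Lemma In_map_iota (A : Type) (f : nat -> A) k a :
  List.In a (map f (iota 0 k)) -> exists j, j < k /\ a = f j.
Proof.
have gen : forall l, List.In a (map f l) -> exists j, j \in l /\ a = f j.
  elim => //= x l IH [<-|H]; first by exists x; rewrite inE eqxx.
  by have [j [jl ->]] := IH H; exists j; rewrite inE jl orbT.
move=> /gen [j [jl ->]]; exists j; split => //; by move: jl; rewrite mem_iota.
Qed.

Section Core.
Variables (M : nat -> nat -> int) (m n : nat) (c r : nat -> int) (C : seq nat -> Prop).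
Hypothesis Hsg : pm_signs M m n c r.
Hypothesis HC : perm_class C.

Definition Ind (p : gperm) := Cgrid M m n C p /\ ~ Mdivisible M m n c r p.

Lemma letter_Ind (T : Type) pi (lab : nat -> T) k beta j :
  Cgrid M m n C pi -> decomp M m n c r pi k beta -> j < k ->
  Ind (letter pi lab beta j).1.
Proof.
move=> [Gpi Cpi] [_ [_ Nd]] jk; split; last exact: Nd.
have SB : size (bmask pi beta j) = size (gpt pi) by rewrite size_mkseq.
have Gr := restrict_gridded Gpi SB.
split => //; apply: (HC.2 _ (gpt pi)) => //; first by case: Gr.
apply: restrict_le => //; by case: Gpi.
Qed.

Theorem core (T : Type) (leT : T -> T -> Prop) :
  (forall x y z, leT x y -> leT y z -> leT x z) ->
  wqo_on (fun pl : gperm * (nat -> T) => Ind pl.1) (lgle leT) ->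
  wqo_on (fun pl : gperm * (nat -> T) => Cgrid M m n C pl.1) (lgle leT).
Proof.
move=> tr W x Sx.
have Hd k : exists kb : nat * (nat -> nat), decomp M m n c r (x k).1 kb.1 kb.2.
  have [k0 [b0 D0]] := @decomp_exists M m n c r (size (gpt (x k).1)).+1 (x k).1 (ltnSn _) (Sx k).1.
  by exists (k0, b0).
pose D k := epsilon (inhabits (0, id)) (fun kb : nat * (nat -> nat) => decomp M m n c r (x k).1 kb.1 kb.2).
have HD k : decomp M m n c r (x k).1 (D k).1 (D k).2.
  exact: (epsilon_spec (inhabits (0, id)) (fun kb : nat * (nat -> nat) => decomp M m n c r (x k).1 kb.1 kb.2) (Hd k)).
pose word k := map (letter (x k).1 (x k).2 (D k).2) (iota 0 (D k).1).
have Sw : forall k, allP (fun pl : gperm * (nat -> T) => Ind pl.1) (word k).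
  move=> k a Ha; have [j [jk ->]] := In_map_iota Ha; exact: letter_Ind (Sx k) (HD k) jk.
have [i [j [ij E]]] := higman (lgle_trans tr) W Sw.
have [g [G1 G2]] := emb_idx (letter (x i).1 (x i).2 (D i).2 0) E.
rewrite /word size_map size_iota in G1 G2.
exists i, j; split => //.
apply: (lift Hsg (k := (D i).1) (k' := (D j).1) (beta := (D i).2) (gamma := (D j).2) (g := g)).
- exact: (Sx i).1.
- exact: (Sx j).1.
- exact: HD.
- exact: HD.
- exact: G1.
- move=> l lk; have [H1 H2] := G2 l lk.
  rewrite /word size_map size_iota in H1.
  move: H2; rewrite /word !(nth_map 0) ?size_iota // !nth_iota //.
Qed.

End Core.

Lemma wqo_sub (A : Type) (S S' : A -> Prop) le : (forall a, S' a -> S a) ->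
  wqo_on S le -> wqo_on S' le.
Proof. by move=> H W x Sx; apply: W => k; apply: H. Qed.

Theorem lemma4p8 (m n : nat) (M : nat -> nat -> int) (c r : nat -> int)
  (C : seq nat -> Prop) :
  gridding_matrix M m n -> pm_signs M m n c r ->
  perm_class C -> (forall s, C s -> Grid M m n s) ->
  (labelled_wqo (fun p => Cgrid M m n C p /\ ~ Mdivisible M m n c r p)
     <-> labelled_wqo (Cgrid M m n C)) /\
  (wqo_on (fun p => Cgrid M m n C p /\ ~ Mdivisible M m n c r p) gle
     <-> wqo_on (Cgrid M m n C) gle).
Proof.
move=> _ Hs Hc _; split; split.
- move=> HI T leT qo wq; apply: (core Hs Hc qo.2); exact: HI.
- move=> HA T leT qo wq; apply: wqo_sub (HA T leT qo wq) => a [H _]; exact: H.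
- move=> HI x Sx.
  pose leU := fun _ _ : unit => True.
  have W : wqo_on (fun pl : gperm * (nat -> unit) => Ind M m n c r C pl.1) (lgle leU).
    move=> y Sy; have [i [j [ij [f Hf]]]] := HI (fun k => (y k).1) Sy.
    by exists i, j; split => //; exists f; split.
  have [i [j [ij [f [Hf _]]]]] := core Hs Hc (T := unit) (leT := leU) (fun _ _ _ _ _ => I) W
     (x := fun k => (x k, fun _ => tt)) Sx.
  by exists i, j; split => //; exists f.
- by apply: wqo_sub => a [H _].
Qed.
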